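(* Applied to the Double Coverage algorithm on the line, the transformation described below, using upon each request $r_i$ the $r_i$-canonical matching, produces a lazy, local and monotone $k$-server algorithm.
   Context: $k$-server on the real line with $d(x,y)=|x-y|$: $k$ servers at initial points; requests arrive online and must be served by moving a server to the request; cost is total distance moved. Double Coverage (DC): on request $r$, let $s_L,s_R$ be the servers immediately to the left and right of $r$ (if one does not exist, ignore it); move both toward $r$ by $\min\{d(s_L,r),d(s_R,r)\}$; serve $r$ with the server that reached it. A server $s$ in configuration $S$ is adjacent to a point $v$ if no other server of $S$ lies on the segment between $v$ and $s$. An algorithm is lazy if on each request it moves only one server, to the request; local if it always serves a request with an adjacent server; monotone if whenever it would serve a request at $r$ with server $s$, it would also serve a request at any point between $r$ and $s$ with $s$. For sorted sets $X=\{x_1\le\dots\le x_k\}$, $Y=\{y_1\le\dots\le y_k\}$, the canonical matching matches $x_i$ with $y_i$. For $r\in X$, the $r$-canonical matching is obtained from the canonical matching as follows: if $r$ is matched to $y$ and other points of $Y$ lie between $r$ and $y$, let $y'$ be the one closest to $r$, with $y'$ matched to $x$; rematch $r$ with $y'$ and $x$ with $y$. Transformation: $A'$ starts in the same configuration as DC; upon request $r_i$, let $S_{DC}$ be DC's configuration after serving $r_i$ and $S_{A'}$ the configuration of $A'$ just before; compute the $r_i$-canonical matching of $S_{DC}$ to $S_{A'}$ and serve $r_i$ with the server of $A'$ matched to $r_i$. *)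

(* Defs.v *)
(* Points of the line live in an arbitrary real field R
   (in particular the reals); d(x,y) = `|x - y|. *)
From HB Require Import structures.
From mathcomp Require Import all_boot all_order all_algebra.
Set Implicit Arguments. Unset Strict Implicit. Unset Printing Implicit Defensive.
Import Order.TTheory GRing.Theory Num.Theory.
Local Open Scope ring_scope.

Section KServer.
Variable R : realFieldType.

(* A configuration of k servers is a multiset of points, represented by a
   sequence of length k (order irrelevant). *)

Definition seq_max (s : seq R) : R := foldr Num.max (head 0 s) s.
Definition seq_min (s : seq R) : R := foldr Num.min (head 0 s) s.

Definition move1 (S : seq R) (a b : R) : seq R := set_nth 0 S (index a S) b.

Definition between (a b z : R) : bool := (Num.min a b <= z) && (z <= Num.max a b).

Definition dc_step (S : seq R) (r : R) : seq R :=
  if r \in S then S else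
  let L := [seq s <- S | s < r] in
  let Rs := [seq s <- S | r < s] in
  if L is [::] then move1 S (seq_min Rs) r
  else if Rs is [::] then move1 S (seq_max L) r
  else let sL := seq_max L in let sR := seq_min Rs in
       let d := Num.min (r - sL) (sR - r) in
       move1 (move1 S sL (sL + d)) sR (sR - d).

(* Matchings between sorted xs = x_0 <= ... <= x_{k-1} and sorted
   ys = y_0 <= ... <= y_{k-1} are given as maps on indices: i |-> j means
   x_i is matched with y_j. *)
Definition canonical_matching : nat -> nat := id.

(* The r-canonical matching (r a point of xs; we use its first occurrence). *)
Definition rcanonical_matching (xs ys : seq R) (r : R) : nat -> nat :=
  let i0 := index r xs in
  let y := nth 0 ys (canonical_matching i0) in
  let cands := [seq j <- iota 0 (size ys)
               | (j != canonical_matching i0) && between r y (nth 0 ys j)] in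
  let dist j := `|nth 0 ys j - r| in
  if cands is j1 :: _ then
    let j := foldr (fun j b => if dist j < dist b then j else b) j1 cands in
    (* y' = y_j is closest to r; it was matched to x = x_{j}; rematch
       r with y' and x with y *)
    fun i => if i == i0 then j
             else if i == j then canonical_matching i0
             else canonical_matching i
  else canonical_matching.

Definition rmatched (X A : seq R) (r : R) : R :=
  let xs := sort <=%R X in
  let ys := sort <=%R A in
  nth 0 ys (rcanonical_matching xs ys r (index r xs)).

(* The transformed algorithm A'.  State: (DC configuration, A' configuration). *)
Definition Aprime_server (D A : seq R) (r : R) : R := rmatched (dc_step D r) A r.

Definition trans_step (st : seq R * seq R) (r : R) : seq R * seq R :=
  (dc_step st.1 r, move1 st.2 (Aprime_server st.1 st.2 r) r).

Definition trans_run (S0 : seq R) (rs : seq R) : seq R * seq R :=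
  foldl trans_step (S0, S0) rs.

Definition lazy_step (A A' : seq R) (r : R) : Prop :=
  exists2 s, s \in A & perm_eq A' (r :: rem s A).

Definition adjacent (S : seq R) (v s : R) : Prop :=
  s \in S /\ forall t, t \in S -> t != s -> ~~ between v s t.

Definition monotone_at (D A : seq R) : Prop :=
  forall r r', between r (Aprime_server D A r) r' ->
    Aprime_server D A r' = Aprime_server D A r.

End KServer.

(* Main.v *)
Require Import Defs.
From HB Require Import structures.
From mathcomp Require Import all_boot all_order all_algebra.
From mathcomp Require Import zify ring lra.
Import Order.TTheory GRing.Theory Num.Theory.
Local Open Scope ring_scope.



Lemma set_nth_perm (T : eqType) (x0 : T) (S : seq T) (a b : T) :
  a \in S -> perm_eq (set_nth x0 S (index a S) b) (b :: rem a S).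
Proof.
elim: S => //= c t IH; rewrite inE; case: (eqVneq c a) => [-> _ //| ne].
move=> /= /IH h.
apply: (@perm_trans _ (c :: b :: rem a t)); first by rewrite perm_cons.
by rewrite (perm_catCA [:: c] [:: b]).
Qed.

Lemma move1_perm {R : realFieldType} (S : seq R) a b :
  a \in S -> perm_eq (move1 S a b) (b :: rem a S).
Proof. exact: set_nth_perm. Qed.

Lemma move1_size {R : realFieldType} (S : seq R) a b :
  a \in S -> size (move1 S a b) = size S.
Proof.
move=> aS; rewrite (perm_size (move1_perm _ _ b aS)) /= size_rem //.
by case: S aS.
Qed.

Lemma move1_mem {R : realFieldType} (S : seq R) a b x :
  a \in S -> x \in S -> x != a -> x \in move1 S a b.
Proof.
move=> aS xS xa; rewrite (perm_mem (move1_perm _ _ b aS)) inE; apply/orP; right.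
by move: xS; rewrite (perm_mem (perm_to_rem aS)) inE (negbTE xa).
Qed.

Lemma move1_memb {R : realFieldType} (S : seq R) a b :
  a \in S -> b \in move1 S a b.
Proof. by move=> aS; rewrite (perm_mem (move1_perm _ _ b aS)) inE eqxx. Qed.

Lemma move1_count {R : realFieldType} (S : seq R) a b (p : pred R) :
  a \in S -> (count p (move1 S a b) + p a = count p S + p b)%N.
Proof.
move=> aS; rewrite ((permP (move1_perm _ _ b aS)) p) ((permP (perm_to_rem aS)) p) /=.
lia.
Qed.

Lemma rmaxE {R : realFieldType} (x y : R) : Num.max x y = if x < y then y else x.
Proof. reflexivity. Qed.
Lemma rminE {R : realFieldType} (x y : R) : Num.min x y = if x < y then x else y.
Proof. reflexivity. Qed.

Lemma foldr_max_spec {R : realFieldType} (z : R) (t : seq R) :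
  foldr Num.max z t \in z :: t /\ forall u, u \in z :: t -> u <= foldr Num.max z t.
Proof.
elim: t => [|a t [IH1 IH2]] /=.
  by split=> [|u]; rewrite ?inE // => /eqP ->.
rewrite rmaxE; set m := foldr _ z t; case: ifP => h; split.
- by move: IH1; rewrite !inE => /orP [->|->]; rewrite ?orbT.
- move=> u; rewrite !inE => /orP [/eqP ->|/orP [/eqP ->|ut]].
  + by apply: IH2; rewrite mem_head.
  + exact: ltW.
  + by apply: IH2; rewrite inE ut orbT.
- by rewrite !inE eqxx orbT.
- move/negbT: h; rewrite -leNgt => h.
  move=> u; rewrite !inE => /orP [/eqP ->|/orP [/eqP ->|ut]].
  + by apply: le_trans h; apply: IH2; rewrite mem_head.
  + exact: lexx.
  + by apply: le_trans h; apply: IH2; rewrite inE ut orbT.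
Qed.

Lemma foldr_min_spec {R : realFieldType} (z : R) (t : seq R) :
  foldr Num.min z t \in z :: t /\ forall u, u \in z :: t -> foldr Num.min z t <= u.
Proof.
elim: t => [|a t [IH1 IH2]] /=.
  by split=> [|u]; rewrite ?inE // => /eqP ->.
rewrite rminE; set m := foldr _ z t; case: ifP => h; split.
- by rewrite !inE eqxx orbT.
- move=> u; rewrite !inE => /orP [/eqP ->|/orP [/eqP ->|ut]].
  + by apply: le_trans (ltW h) _; apply: IH2; rewrite mem_head.
  + exact: lexx.
  + by apply: le_trans (ltW h) _; apply: IH2; rewrite inE ut orbT.
- by move: IH1; rewrite !inE => /orP [->|->]; rewrite ?orbT.
- move/negbT: h; rewrite -leNgt => h.
  move=> u; rewrite !inE => /orP [/eqP ->|/orP [/eqP ->|ut]].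
  + by apply: IH2; rewrite mem_head.
  + exact: h.
  + by apply: IH2; rewrite inE ut orbT.
Qed.

Lemma seq_max_spec {R : realFieldType} (l : R) L :
  seq_max (l :: L) \in l :: L /\ forall u, u \in l :: L -> u <= seq_max (l :: L).
Proof.
have [h1 h2] := foldr_max_spec l (l :: L); change (seq_max (l :: L)) with (foldr Num.max l (l :: L)).
split; first by move: h1; rewrite inE => /orP [/eqP ->|//]; rewrite mem_head.
by move=> u uL; apply: h2; rewrite inE uL orbT.
Qed.

Lemma seq_min_spec {R : realFieldType} (l : R) L :
  seq_min (l :: L) \in l :: L /\ forall u, u \in l :: L -> seq_min (l :: L) <= u.
Proof.
have [h1 h2] := foldr_min_spec l (l :: L); change (seq_min (l :: L)) with (foldr Num.min l (l :: L)).
split; first by move: h1; rewrite inE => /orP [/eqP ->|//]; rewrite mem_head.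
by move=> u uL; apply: h2; rewrite inE uL orbT.
Qed.



Definition delta {R : realFieldType} (D : seq R) (r : R) : nat :=
  if r \in D then 0%N else
  let L := [seq s <- D | s < r] in let Rs := [seq s <- D | r < s] in
  if L is [::] then 0%N else if Rs is [::] then 1%N
  else nat_of_bool (r - seq_max L <= seq_min Rs - r).

Lemma ltF {R : realFieldType} {x y : R} : y <= x -> (x < y) = false.
Proof. by rewrite ltNge => ->. Qed.
Lemma leF {R : realFieldType} {x y : R} : y < x -> (x <= y) = false.
Proof. by rewrite leNgt => ->. Qed.

Lemma dc_facts {R : realFieldType} (D : seq R) r : D != [::] ->
  [/\ size (dc_step D r) = size D, r \in dc_step D r,
      (count (fun x : R => (x < r)%R) (dc_step D r) + delta D r = count (fun x : R => (x < r)%R) D)%N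
      & (delta D r <= 1)%N].
Proof.
move=> D0; rewrite /dc_step /delta /=.
case: ifP => rD; first by rewrite addn0.
have nonL : forall d, d \in D -> d \notin [seq s <- D | s < r] -> r < d.
  move=> d dD; rewrite mem_filter dD andbT => h.
  case: (ltgtP d r) => // e; [by rewrite e in h | by move: rD; rewrite -e dD].
case hL: [seq s <- D | s < r] => [|l L].
  case hR: [seq s <- D | r < s] => [|q Q].
    case: D D0 rD nonL hL hR => // d D _ rD nonL hL hR.
    have := nonL d (mem_head _ _); rewrite hL => /(_ isT) h.
    have : d \in [seq s <- d :: D | r < s] by rewrite mem_filter h mem_head.
    by rewrite hR.
  have [m1 m2] := seq_min_spec q Q; set sR := seq_min _ in m1 m2 *.
  move: (m1); rewrite -hR mem_filter => /andP [rsR sRD].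
  split.
  - exact: move1_size.
  - exact: move1_memb.
  - by have := move1_count _ _ r (fun x : R => (x < r)%R) sRD; rewrite /= ltxx (ltF (ltW rsR)); clear; lia.
  - by [].
have [m1 m2] := seq_max_spec l L; set sL := seq_max _ in m1 m2 *.
move: (m1); rewrite -hL mem_filter => /andP [sLr sLD].
case hR: [seq s <- D | r < s] => [|q Q].
  split.
  - exact: move1_size.
  - exact: move1_memb.
  - by have := move1_count _ _ r (fun x : R => (x < r)%R) sLD; rewrite /= ltxx sLr; clear; lia.
  - by [].
have [n1 n2] := seq_min_spec q Q; set sR := seq_min _ in n1 n2 *.
move: (n1); rewrite -hR mem_filter => /andP [rsR sRD].
set d := Num.min _ _.
set D1 := move1 D sL (sL + d).
have sRD1 : sR \in D1 by apply: move1_mem => //; rewrite neq_lt (lt_trans sLr rsR) orbT.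
have c1 := move1_count _ _ (sL + d) (fun x : R => (x < r)%R) sLD.
have c2 := move1_count _ _ (sR - d) (fun x : R => (x < r)%R) sRD1.
rewrite -/D1 /= in c1 c2.
rewrite (ltF (ltW rsR)) sLr in c1 c2.
have dE : d = if r - sL < sR - r then r - sL else sR - r by rewrite /d rminE.
clearbody d.
split.
- by rewrite move1_size // move1_size.
- case: ifP dE => h de.
    apply: move1_mem => //; last by rewrite neq_lt rsR.
    have -> : r = sL + d by rewrite de; ring.
    exact: move1_memb.
  have -> : r = sR - d by rewrite de; ring.
  exact: move1_memb.
- case: ifP dE => h de.
    have e1 : (sL + d < r) = false by apply: ltF; rewrite de; lra.
    have e2 : (sR - d < r) = false by apply: ltF; rewrite de; lra.
    have e3 : (r - sL <= sR - r) = true by apply/ltW.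
    rewrite e1 in c1; rewrite e2 in c2; rewrite ?e3 /=. move: c1 c2; clear; lia.
  move/negbT: h; rewrite -leNgt => h.
  have e2 : (sR - d < r) = false by apply: ltF; rewrite de; lra.
  rewrite e2 in c2.
  case: (ltrP (sR - r) (r - sL)) => h2.
    have e1 : (sL + d < r) = true by rewrite de; lra.
    have e3 : (r - sL <= sR - r) = false by apply: leF.
    rewrite e1 in c1; rewrite ?e3 /=; move: c1 c2; clear; lia.
  have e1 : (sL + d < r) = false by apply: ltF; rewrite de; lra.
  have e3 : (r - sL <= sR - r) = true by [].
  rewrite e1 in c1; rewrite ?e3 /=; move: c1 c2; clear; lia.
- by case: (_ <= _).
Qed.



Lemma index_sorted {R : realFieldType} (x : R) s :
  sorted <=%R s -> x \in s -> index x s = count (fun y : R => (y < x)%R) s.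
Proof.
elim: s => //= a s IH srt.
have sa : all (fun y => a <= y) s := order_path_min le_trans srt.
have srt' : sorted <=%R s := path_sorted srt.
case: (eqVneq a x) => [<- _ | ne].
  rewrite ltxx /=; apply/esym; apply/eqP; rewrite -leqn0 leqNgt -has_count.
  apply/hasPn => y /(allP sa) h /=; by rewrite ltNge h.
rewrite inE eq_sym (negbTE ne) /= => xs.
have ax : a < x by rewrite lt_neqAle ne (allP sa x xs).
by rewrite ax IH.
Qed.

Lemma count_split {R : realFieldType} (r r' : R) (s : seq R) : r < r' ->
  count (fun x : R => (x < r')%R) s =
  (count (fun x : R => (x < r)%R) s + count (fun y : R => (r <= y)%R && (y < r')%R) s)%N.
Proof.
move=> rr; elim: s => //= d s ->.
case: (ltrP d r) => h1; case: (ltrP d r') => h2 /=.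
- move: (count _ s) (count _ s); clear; lia.
- by have := lt_le_trans (lt_trans h1 rr) h2; rewrite ltxx.
- move: (count _ s) (count _ s); clear; lia.
- move: (count _ s) (count _ s); clear; lia.
Qed.

Lemma delta_mono {R : realFieldType} (D : seq R) r r' : r < r' ->
  (forall d, d \in D -> ~~ ((r <= d) && (d < r'))) ->
  (delta D r' <= delta D r)%N.
Proof.
move=> rr none; rewrite /delta.
case: ifP => [_ //|r'D].
have -> : (r \in D) = false.
  apply/negbTE/negP => rD; have := none r rD; by rewrite lexx rr.
have eqL : [seq s <- D | s < r'] = [seq s <- D | s < r].
  apply: eq_in_filter => d dD; have := none d dD.
  rewrite negb_and -ltNge -leNgt => h.
  apply/idP/idP => h2; last exact: lt_trans h2 rr.
  case/orP: h => // h; lra.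
have eqR : [seq s <- D | r' < s] = [seq s <- D | r < s].
  apply: eq_in_filter => d dD; have := none d dD.
  rewrite negb_and -ltNge -leNgt => h.
  apply/idP/idP => h2; first exact: lt_trans rr h2.
  case/orP: h => h; first lra.
  rewrite lt_neqAle h andbT; apply/negP => /eqP e.
  by move: r'D; rewrite e dD.
rewrite eqL eqR.
case: [seq s <- D | s < r] => [|l L] //; case: [seq s <- D | r < s] => [|q Q] //.
case: (boolP (r' - seq_max (l :: L) <= seq_min (q :: Q) - r')) => h //=.
have -> : r - seq_max (l :: L) <= seq_min (q :: Q) - r by lra.
by [].
Qed.

Lemma m_mono {R : realFieldType} (D : seq R) r r' : D != [::] -> r <= r' ->
  (count (fun x : R => (x < r)%R) (dc_step D r) <=
   count (fun x : R => (x < r')%R) (dc_step D r'))%N.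
Proof.
move=> D0 rr'.
have [_ _ c1 b1] := dc_facts _ r D0; have [_ _ c2 b2] := dc_facts _ r' D0.
case: (eqVneq r r') => [<- //| ne].
have lt : r < r' by rewrite lt_neqAle ne.
have sp := count_split _ _ D lt.
case E: (count (fun y : R => (r <= y)%R && (y < r')%R) D) => [|e].
  have dm : (delta D r' <= delta D r)%N.
    apply: delta_mono => // d dD.
    have : ~~ has (fun y : R => (r <= y)%R && (y < r')%R) D by rewrite has_count E.
    by move/hasPn; apply.
  rewrite E in sp; move: c1 c2 sp dm; clear; lia.
rewrite E in sp; move: c1 c2 b1 b2 sp; clear; lia.
Qed.



Lemma btwL {R : realFieldType} (a b z : R) : a <= b -> between a b z = (a <= z) && (z <= b).
Proof.
move=> h; rewrite /between rminE rmaxE; case: (ltrP a b) => h2 //.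
have e : a = b by apply/le_anti; rewrite h h2.
by rewrite e.
Qed.

Lemma btwR {R : realFieldType} (a b z : R) : b <= a -> between a b z = (b <= z) && (z <= a).
Proof.
move=> h; rewrite /between rminE rmaxE; case: (ltrP a b) => h2 //.
have e : a = b by apply/le_anti; rewrite (ltW h2) h.
by rewrite e.
Qed.

Lemma nge {R : realFieldType} (a z : R) : a <= z -> `|z - a| = z - a.
Proof. by move=> h; rewrite ger0_norm // subr_ge0. Qed.
Lemma nle {R : realFieldType} (a z : R) : z <= a -> `|z - a| = a - z.
Proof. by move=> h; rewrite ler0_norm ?opprB // subr_le0. Qed.

Lemma btw_refl {R : realFieldType} (a b : R) : between a b b.
Proof.
case: (lerP a b) => h; first by rewrite btwL //; apply/andP; split.
have h' := ltW h.
by rewrite btwR //; apply/andP; split.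
Qed.

Lemma btw_norm {R : realFieldType} (a b z : R) : between a b z -> `|z - a| <= `|b - a|.
Proof.
case: (lerP a b) => h; first by rewrite btwL // => /andP [h1 h2]; rewrite !nge //; lra.
have h' := ltW h.
by rewrite btwR // => /andP [h1 h2]; rewrite !nle //; lra.
Qed.

Lemma btw_trans {R : realFieldType} (r y s t : R) :
  between r y s -> between r s t -> between r y t.
Proof.
case: (lerP r y) => h.
  rewrite btwL // => /andP [h1 h2]; rewrite btwL // => /andP [h3 h4].
  by rewrite btwL //; apply/andP; split; lra.
have h' := ltW h.
rewrite btwR // => /andP [h1 h2]; rewrite btwR // => /andP [h3 h4].
by rewrite btwR //; apply/andP; split; lra.
Qed.

Lemma btw_eq {R : realFieldType} (r s t : R) :
  between r s t -> `|s - r| <= `|t - r| -> t = s.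
Proof.
case: (lerP r s) => h.
  rewrite btwL // => /andP [h1 h2]; rewrite !nge //; lra.
have h' := ltW h.
rewrite btwR // => /andP [h1 h2]; rewrite !nle //; lra.
Qed.

Lemma mono_real {R : realFieldType} (A : seq R) r y s r' y' s' :
  s \in A -> between r y s ->
  (forall t, t \in A -> between r y t -> `|s - r| <= `|t - r|) ->
  s' \in A -> between r' y' s' ->
  (forall t, t \in A -> between r' y' t -> `|s' - r'| <= `|t - r'|) ->
  between r s r' -> (r <= r' -> y <= y') -> (r' <= r -> y' <= y) -> s' = s.
Proof.
move=> sA b1 m1 s'A b2 m2 b3 o1 o2.
case: (lerP r y) => h.
  move: (b1); rewrite btwL // => /andP [h1 h2].
  move: (b3); rewrite btwL // => /andP [h3 h4].
  have yy := o1 h3.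
  have h5 : r' <= y' by lra.
  move: (b2); rewrite btwL // => /andP [h6 h7].
  have k1 : `|s' - r'| <= `|s - r'| by apply: m2 => //; rewrite btwL //; apply/andP; split; lra.
  have e1 : r' <= s by lra.
  have e2 : r <= s' by lra.
  rewrite (nge _ _ h6) (nge _ _ e1) in k1.
  have k2 : `|s - r| <= `|s' - r| by apply: m1 => //; rewrite btwL //; apply/andP; split; lra.
  rewrite (nge _ _ h1) (nge _ _ e2) in k2.
  lra.
have h' := ltW h.
move: (b1); rewrite btwR // => /andP [h1 h2].
move: (b3); rewrite btwR // => /andP [h3 h4].
have yy := o2 h4.
have h5 : y' <= r' by lra.
move: (b2); rewrite btwR // => /andP [h6 h7].
have k1 : `|s' - r'| <= `|s - r'| by apply: m2 => //; rewrite btwR //; apply/andP; split; lra.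
have e1 : s <= r' by lra.
have e2 : s' <= r by lra.
rewrite (nle _ _ h7) (nle _ _ e1) in k1.
have k2 : `|s - r| <= `|s' - r| by apply: m1 => //; rewrite btwR //; apply/andP; split; lra.
rewrite (nle _ _ h2) (nle _ _ e2) in k2.
lra.
Qed.



Lemma argmin_spec {R : realFieldType} (f : nat -> R) (z : nat) (l : seq nat) :
  foldr (fun j b => if f j < f b then j else b) z l \in z :: l /\
  forall j', j' \in z :: l -> f (foldr (fun j b => if f j < f b then j else b) z l) <= f j'.
Proof.
elim: l => [|a l IH] /=; first by split => [|j']; rewrite ?inE // => /eqP ->.
case: IH; set b := foldr _ z l => IH1 IH2.
case: ifP => h; split.
- by rewrite !inE eqxx orbT.
- move=> j'; rewrite !inE => /orP [/eqP ->|/orP [/eqP ->|jl]].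
  + apply: le_trans (ltW h) _; apply: IH2; exact: mem_head.
  + exact: lexx.
  + apply: le_trans (ltW h) _; apply: IH2; by rewrite inE jl orbT.
- by move: IH1; rewrite !inE => /orP [->|->]; rewrite ?orbT.
- move/negbT: h; rewrite -leNgt => h.
  move=> j'; rewrite !inE => /orP [/eqP ->|/orP [/eqP ->|jl]].
  + apply: IH2; exact: mem_head.
  + exact: h.
  + apply: IH2; by rewrite inE jl orbT.
Qed.

Lemma rmatched_spec {R : realFieldType} (X A : seq R) r : r \in X -> size X = size A ->
  let y := nth 0 (sort <=%R A) (index r (sort <=%R X)) in
  [/\ rmatched X A r \in A, between r y (rmatched X A r) &
     forall t, t \in A -> between r y t -> `|rmatched X A r - r| <= `|t - r|].
Proof.
move=> rX sz.
rewrite /rmatched /rcanonical_matching /canonical_matching /=.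
set ys := sort <=%R A; set i0 := index r (sort <=%R X).
have i0lt : (i0 < size ys)%N.
  by rewrite size_sort -sz -(size_sort <=%R X) index_mem mem_sort.
have tys : forall t, t \in A -> exists2 j, (j < size ys)%N & t = nth 0 ys j.
  move=> t tA; exists (index t ys); first by rewrite index_mem mem_sort.
  by rewrite nth_index // mem_sort.
set y := ys`_i0.
set cands := [seq j <- _ | _].
have memc : forall j, (j \in cands) = ((j != i0) && between r y ys`_j) && (j < size ys)%N.
  by move=> j; rewrite mem_filter mem_iota add0n leq0n.
have yA : y \in A by rewrite -(mem_sort <=%R) mem_nth.
case E: cands => [|j1 c] /=.
  split => //; first exact: btw_refl.
  move=> t tA bt; case: (tys t tA) => j jl tj.
  case: (eqVneq j i0) => [ej|nej]; first by rewrite tj ej.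
  have : j \in cands by rewrite memc nej -tj bt jl.
  by rewrite E.
rewrite eqxx.
have [m1 m2] := argmin_spec (fun j => `|ys`_j - r|) j1 (j1 :: c).
move: m1 m2 => /=; set jm := (if _ then j1 else _) => m1 m2.
have {}m1 : jm \in cands by rewrite E; move: m1; rewrite !inE orbA orbb.
have {}m2 : forall j', j' \in cands -> `|ys`_jm - r| <= `|ys`_j' - r|.
  by move=> j' jc; apply: m2; rewrite inE -E jc orbT.
move: (m1); rewrite memc => /andP [/andP [_ bj] jml].
split.
- by rewrite -(mem_sort <=%R) mem_nth.
- exact: bj.
- move=> t tA bt; case: (tys t tA) => j jl tj.
  case: (eqVneq j i0) => [ej|nej].
    by rewrite tj ej; apply: btw_norm.
  rewrite tj; apply: m2; by rewrite memc nej -tj bt jl.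
Qed.



Lemma serv_spec {R : realFieldType} (D A : seq R) r : D != [::] -> size D = size A ->
  let m := count (fun x : R => (x < r)%R) (dc_step D r) in
  let y := nth 0 (sort <=%R A) m in
  [/\ (m < size A)%N, Aprime_server D A r \in A, between r y (Aprime_server D A r) &
     forall t, t \in A -> between r y t -> `|Aprime_server D A r - r| <= `|t - r|].
Proof.
move=> D0 sz m y.
have [szX rX _ _] := dc_facts _ r D0.
have im : index r (sort <=%R (dc_step D r)) = m.
  have srt : sorted <=%R (sort <=%R (dc_step D r)) by apply: sort_sorted; exact: le_total.
  rewrite (index_sorted _ _ srt); last by rewrite mem_sort.
  by rewrite /m; apply/permP; rewrite perm_sort.
have [h1 h2 h3] := rmatched_spec _ A r rX (etrans szX sz).
rewrite im -/y in h2 h3.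
split => //.
by rewrite -sz -szX -im -(size_sort <=%R) index_mem mem_sort.
Qed.

Lemma run_size {R : realFieldType} (k : nat) (rs : seq R) (p : seq R * seq R) :
  (0 < k)%N -> size p.1 = k -> size p.2 = k ->
  size (foldl (@trans_step R) p rs).1 = k /\ size (foldl (@trans_step R) p rs).2 = k.
Proof.
move=> k0; elim: rs p => [|r rs IH] p s1 s2 //=.
have D0 : p.1 != [::] by apply/eqP => e; move: s1 k0; rewrite e => <-.
have [szX _ _ _] := dc_facts _ r D0.
have [_ sA _ _] := serv_spec _ _ r D0 (etrans s1 (esym s2)).
apply: IH => /=; first by rewrite szX.
by rewrite move1_size.
Qed.

Theorem lemma5 (R : realFieldType) (k : nat) (S0 rs : seq R) :
  (0 < k)%N -> size S0 = k ->
  let st := trans_run S0 rs in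
  (forall r : R,
      lazy_step st.2 (trans_step st r).2 r /\
      adjacent st.2 r (Aprime_server st.1 st.2 r)) /\
  monotone_at st.1 st.2.
Proof.
move=> k0 sz st.
have [s1 s2] : size st.1 = k /\ size st.2 = k by apply: run_size.
have D0 : st.1 != [::] by apply/eqP => e; move: s1 k0; rewrite e => <-.
have szz : size st.1 = size st.2 by rewrite s1 s2.
split.
  move=> r; have [_ sA b m] := serv_spec _ _ r D0 szz.
  split.
    exists (Aprime_server st.1 st.2 r) => //.
    exact: move1_perm.
  split => // t tA tne; apply/negP => bt.
  have := m t tA (btw_trans _ _ _ _ b bt).
  move/(btw_eq _ _ _ bt) => e; by rewrite e eqxx in tne.
move=> r r' b.
have [l1 sA b1 m1] := serv_spec _ _ r D0 szz.
have [l2 sA' b2 m2] := serv_spec _ _ r' D0 szz.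
have srt := sort_sorted (@le_total _ R) st.2.
apply: (mono_real _ _ _ _ _ _ _ sA b1 m1 sA' b2 m2 b).
  move=> rr; apply: (sorted_leq_nth le_trans lexx 0 srt); rewrite ?inE ?size_sort //.
  exact: m_mono.
move=> rr; apply: (sorted_leq_nth le_trans lexx 0 srt); rewrite ?inE ?size_sort //.
exact: m_mono.
Qed.
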